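(* Let $H_0$ be a bounded operator on a Hilbert space with finite-dimensional kernel, admitting a bounded reflexive generalized inverse $H_0^{(-1)}$, and suppose $\|H_0\|=1$. Let $W=\lambda w$ with $w$ bounded, $\|w\|=1$, $\lambda\ge0$ real, and $\lambda<1/\varkappa(H_0,H_0^{(-1)})$. Then $\dim\mathrm{Ker}(H_0+W)\le\dim\mathrm{Ker}\,H_0$. If moreover equality holds, then $$\mathrm{Ker}(H_0+W)=(I+H_0^{(-1)}W)^{-1}\,\mathrm{Ker}\,H_0 .$$
   Context: A reflexive generalized inverse of $H_0$ is an operator $H_0^{(-1)}$ with $H_0^{(-1)}H_0H_0^{(-1)}=H_0^{(-1)}$ and $H_0H_0^{(-1)}H_0=H_0$. The generalized condition number is $\varkappa(H_0,H_0^{(-1)}):=\|H_0\|\,\|H_0^{(-1)}\|$. *)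

(* Defs.v *)
From HB Require Import structures.
From mathcomp Require Import all_boot all_order all_algebra.
From mathcomp Require Import all_classical all_reals all_analysis.
From mathcomp Require Import complex.
Set Implicit Arguments. Unset Strict Implicit. Unset Printing Implicit Defensive.
Import Order.TTheory GRing.Theory Num.Theory.
Import numFieldNormedType.Exports.
Local Open Scope ring_scope.
Local Open Scope classical_set_scope.
Local Open Scope complex_scope.

Definition hilbert_ip (R : realType) (V : completeNormedModType R[i])
    (ip : V -> V -> R[i]) : Prop :=
  [/\ (forall (a : R[i]) (x y z : V), ip (a *: x + y) z = a * ip x z + ip y z),
      (forall x y : V, ip y x = (ip x y)^*) &
      (forall x : V, (`|x| : R[i]) ^+ 2 = ip x x)].

Definition is_opnorm (R : realType) (V : normedModType R[i]) (f : V -> V)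
    (c : R[i]) : Prop :=
  (forall x : V, `|f x| <= c * `|x|) /\
  (forall c' : R[i], (forall x : V, `|f x| <= c' * `|x|) -> c <= c').

Definition bounded_op (R : realType) (V : normedModType R[i]) (f : V -> V) :=
  exists c, is_opnorm f c.

Definition ker (R : realType) (V : normedModType R[i]) (f : V -> V) : set V :=
  [set x | f x = 0].

Definition has_dim (R : realType) (V : normedModType R[i]) (S : set V)
    (n : nat) : Prop :=
  exists b : 'I_n -> V,
    (forall c : 'I_n -> R[i], \sum_(i < n) c i *: b i = 0 -> forall i, c i = 0) /\
    S = [set x | exists c : 'I_n -> R[i], x = \sum_(i < n) c i *: b i].

Definition refl_ginv (R : realType) (V : normedModType R[i]) (H G : V -> V) :=
  (forall x, G (H (G x)) = G x) /\ (forall x, H (G (H x)) = H x).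

(* Main.v *)
Require Import Defs.
From HB Require Import structures.
From mathcomp Require Import all_boot all_order all_algebra.
From mathcomp Require Import all_classical all_reals all_analysis.
From mathcomp Require Import complex.
From mathcomp Require Import ring lra.
Import Order.TTheory GRing.Theory Num.Theory.
Import numFieldNormedType.Exports.
Local Open Scope ring_scope.
Local Open Scope classical_set_scope.
Local Open Scope complex_scope.

Section S.
Context {R : realType} {V : completeNormedModType R[i]}.
Definition nv (x : V) : R := complex.Re `|x|.
Lemma nvE x : `|x| = (nv x)%:C.
Proof. by rewrite /nv complex.RRe_real // ger0_real. Qed.
Lemma nv_ge0 x : 0 <= nv x.
Proof. by rewrite -ler0c -nvE. Qed.
Lemma nvD x y : nv (x + y) <= nv x + nv y.
Proof. by rewrite -lecR raddfD /= -!nvE ler_normD. Qed.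
Lemma nvN x : nv (- x) = nv x.
Proof. by rewrite /nv normrN. Qed.
Lemma nv0 x : nv x = 0 -> x = 0.
Proof. by move=> h; apply/normr0_eq0; rewrite nvE h. Qed.
Lemma normcR (c : R) : `|c%:C| = `|c|%:C.
Proof. by rewrite normc_def /= expr0n /= addr0 sqrtr_sqr. Qed.
Lemma nvZ (c : R) x : nv (c%:C *: x) = `|c| * nv x.
Proof. apply: complexI. rewrite rmorphM /= -!nvE normrZ. by rewrite normcR. Qed.
Lemma zm (a b c d : V) : a + c - b = (a - (b - d)) + (c - d).
Proof. by rewrite opprB -[RHS]addrA (addrC (d - b)) [c - d + _]addrA subrK addrA. Qed.

Lemma nv00 : nv 0 = 0.
Proof. by rewrite /nv normr0. Qed.

Lemma neumann (A : V -> V) (addA : forall x y, A (x - y) = A x - A y) (q : R) :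
  0 <= q -> q < 1 -> (forall x, nv (A x) <= q * nv x) ->
  forall y, exists x, x + A x = y.
Proof.
move=> q0 q1 Aq y.
have A0 : A 0 = 0 by rewrite -[in A _](subrr (0:V)) addA subrr.
pose f := fun z => y - A z.
pose x k := iter k f 0.
have xS k : x k.+1 = y - A (x k) by [].
have st1 k : nv (x k.+1 - x k) <= q ^+ k * nv y.
  elim: k => [|k IH]; first by rewrite /x /f /= A0 !subr0 expr0 mul1r.
  have -> : x k.+2 - x k.+1 = A (x k) - A (x k.+1).
    by rewrite (xS k.+1) {2}(xS k) opprB addrC -addrA addKr.
  rewrite -addA exprS -mulrA.
  apply: (le_trans (Aq _)); apply: ler_wpM2l => //.
  by rewrite -opprB nvN.
have st2 n m : (1 - q) * nv (x (n + m)%N - x n) <= q ^+ n * (1 - q ^+ m) * nv y.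
  elim: m => [|m IH]; first by rewrite addn0 subrr nv00 expr0 subrr !mulr0 mul0r.
  have h1 := nvD (x (n + m).+1 - x (n + m)%N) (x (n + m)%N - x n).
  rewrite addrA subrK in h1.
  have h2 := st1 (n + m)%N. rewrite exprD in h2.
  rewrite addnS exprS.
  have hq : 0 <= 1 - q by lra.
  have hY := nv_ge0 y.
  have ha : 0 <= q ^+ n by exact: exprn_ge0.
  have hb : 0 <= q ^+ m by exact: exprn_ge0.
  have := ler_wpM2l hq h1.
  have := ler_wpM2l hq h2.
  nra.
have hq : 0 < 1 - q by lra.
have hY := nv_ge0 y.
have st3 n m : (n <= m)%N -> nv (x m - x n) * (1 - q) <= q ^+ n * nv y.
  move=> /subnKC <-; have := st2 n (m - n)%N.
  have hb : 0 <= q ^+ (m - n) by exact: exprn_ge0.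
  have ha : 0 <= q ^+ n by exact: exprn_ge0.
  have := mulr_ge0 (mulr_ge0 ha hb) hY.
  nra.
have cx : cvgn x.
  apply/cauchy_cvgP; apply/cauchy_ballP => e e0.
  have er : e = (complex.Re e)%:C by rewrite complex.RRe_real // gtr0_real.
  set r := complex.Re e in er.
  have r0 : 0 < r by rewrite -ltcR -er.
  have qn : (fun n => q ^+ n) @ \oo --> (0:R).
    by apply: cvg_expr; rewrite ger0_norm.
  pose d := r * (1 - q) / (nv y + 1).
  have d0 : 0 < d by rewrite /d divr_gt0 // ?mulr_gt0 //; lra.
  have dE : d * (nv y + 1) = r * (1 - q) by rewrite /d; field; lra.
  move/cvgr_dist_lt: qn => /(_ d d0) [N _ HN].
  have key n m : (n <= m)%N -> (N <= n)%N -> nv (x m - x n) < r.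
    move=> nm Nn; have := HN n Nn; rewrite sub0r normrN ger0_norm ?exprn_ge0 // => h.
    have := st3 n m nm; have := nv_ge0 (x m - x n).
    have ha : 0 <= q ^+ n by exact: exprn_ge0.
    nra.
  near_simpl.
  exists ([set n | (N <= n)%N], [set n | (N <= n)%N]); first by split; exists N.
  move=> [n m] [/= Nn Nm].
  rewrite -ball_normE /= er nvE ltcR.
  case: (leqP n m) => nm; first by rewrite -nvN opprB; exact: key.
  exact: key (ltnW nm) Nm.
exists (limn x).
set l := limn x.
have xl : x @ \oo --> l := cx.
suff : nv (l + A l - y) = 0 by move/nv0/eqP; rewrite subr_eq0 => /eqP.
set z := nv (l + A l - y).
have bnd e : 0 < e -> z <= (1 + q) * e.
  move=> e0.
  have e0' : 0 < e%:C by rewrite ltcR.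
  move/cvgr_dist_lt: xl => /(_ _ e0') [N _ HN].
  have h1 := HN N.+1 (leqnSn N); have h2 := HN N (leqnn N).
  rewrite nvE ltcR in h1; rewrite nvE ltcR in h2.
  rewrite /z (zm l y (A l) (A (x N))) -addA -xS.
  apply: (le_trans (nvD _ _)). have := Aq (l - x N). nra.
have z0 : 0 <= z := nv_ge0 _.
apply/eqP; rewrite eq_le z0 andbT leNgt; apply/negP => zp.
have := bnd (z / (2 * (1 + q))) (divr_gt0 zp (mulr_gt0 (ltr0Sn _ 1) (ltr_pwDl ltr01 q0))).
have -> : (1 + q) * (z / (2 * (1 + q))) = z / 2 by field; lra.
lra.
Qed.
End S.
Lemma dim_transfer (R : realType) (V : normedModType R[i]) (S K0 : set V)
  (T : V -> V) (n : nat) :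
  has_dim K0 n -> S 0 -> (forall a x y, S x -> S y -> S (a *: x + y)) ->
  (forall a x y, T (a *: x + y) = a *: T x + T y) ->
  (forall x, S x -> K0 (T x)) -> injective T ->
  exists m, has_dim S m /\ (m <= n)%N /\
    (m = n -> forall y, K0 y -> exists2 x, S x & T x = y).
Proof.
move=> [b [bind bspan]] S0 Sl Tl ST Tinj.
have T0 : T 0 = 0.
  have h := Tl 1 0 0; rewrite !scale1r addr0 in h.
  by apply: (addrI (T 0)); rewrite addr0 -h.
have TZ a x : T (a *: x) = a *: T x by have := Tl a x 0; rewrite !addr0 T0 addr0.
have TD x y : T (x + y) = T x + T y by have := Tl 1 x y; rewrite !scale1r.
have Tsum k (c : 'I_k -> R[i]) u :
    T (\sum_(i < k) c i *: u i) = \sum_(i < k) c i *: T (u i).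
  by rewrite (big_morph T TD T0); apply: eq_bigr => i _; rewrite TZ.
have SZ a x : S x -> S (a *: x) by move=> Sx; have := Sl a x 0 Sx S0; rewrite addr0.
have SD x y : S x -> S y -> S (x + y) by move=> Sx Sy; have := Sl 1 x y Sx Sy; rewrite scale1r.
have Ssum k (c : 'I_k -> R[i]) u : (forall i, S (u i)) -> S (\sum_(i < k) c i *: u i).
  by move=> Su; apply: big_ind => // i _; apply: SZ.
pose lc (v : 'rV[R[i]]_n) := \sum_(j < n) v 0 j *: b j.
have lc0 : lc 0 = 0 by rewrite /lc big1 // => j _; rewrite mxE scale0r.
have lcD u v : lc (u + v) = lc u + lc v.
  by rewrite /lc -big_split; apply: eq_bigr => j _; rewrite mxE scalerDl.
have lcZ a u : lc (a *: u) = a *: lc u.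
  by rewrite /lc scaler_sumr; apply: eq_bigr => j _; rewrite mxE scalerA.
have lcsum k (c : 'I_k -> R[i]) u :
    lc (\sum_(i < k) c i *: u i) = \sum_(i < k) c i *: lc (u i).
  by rewrite (big_morph lc lcD lc0); apply: eq_bigr => i _; rewrite lcZ.
have lcinj v : lc v = 0 -> v = 0.
  move=> h; apply/rowP => j; rewrite mxE; exact: bind h j.
pose C v := exists x, S x /\ T x = lc v.
have Ccl a u v : C u -> C v -> C (a *: u + v).
  move=> [xu [Su Tu]] [xv [Sv Tv]]; exists (a *: xu + xv); split; first exact: Sl.
  by rewrite Tl lcD lcZ Tu Tv.
have C0 : C 0 by exists 0; rewrite T0 lc0.
pose P k := `[< exists U : {vspace 'rV[R[i]]_n}, (forall v, v \in U -> C v) /\ \dim U = k >].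
have dimle (U : {vspace 'rV[R[i]]_n}) : (\dim U <= n)%N.
  by have := dimvS (subvf U); rewrite dimvf dim_matrix mul1r.
have exP : exists k, P k.
  exists 0%N; apply/asboolP; exists 0%VS; split; last exact: dimv0.
  by move=> v; rewrite memv0 => /eqP ->.
have bndP k : P k -> (k <= n)%N by move/asboolP => [U [_ <-]].
case: (ex_maxnP exP bndP) => m /asboolP [U [UC dimU]] maxP.
have CU v : C v -> v \in U.
  move=> Cv; apply/negPn/negP => vU.
  have PU' : P (\dim (U + <[v]>)%VS).
    apply/asboolP; exists (U + <[v]>)%VS; split => //.
    move=> u /memv_addP [u1 u1U [u2 /vlineP [k ->] ->]].
    by rewrite addrC; apply: Ccl => //; apply: UC.
  have := maxP _ PU'; rewrite -dimU => le.
  have /eqP eU : U == (U + <[v]>)%VS by rewrite eqEdim addvSl le.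
  move/negP: vU; apply; rewrite eU; apply: (subvP (addvSr U <[v]>)); by apply: memv_line.
pose vb := vbasis U.
have vbC (i : 'I_(\dim U)) : exists x, S x /\ T x = lc vb`_i.
  apply: UC; apply: vbasis_mem; apply: mem_nth; by rewrite size_tuple.
have [xs xsP] := choice vbC.
have Txs (c : 'I_(\dim U) -> R[i]) :
    T (\sum_(i < \dim U) c i *: xs i) = lc (\sum_(i < \dim U) c i *: vb`_i).
  by rewrite Tsum lcsum; apply: eq_bigr => i _; rewrite (xsP i).2.
exists (\dim U); split; last split.
- exists xs; split.
  + move=> c hc j.
    have h0 : lc (\sum_(i < \dim U) c i *: vb`_i) = 0 by rewrite -Txs // hc T0.
    have := congr1 (coord vb j) (lcinj _ h0).
    rewrite linear0 linear_sum /= => <-.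
    rewrite (bigD1 j) //= big1 ?addr0.
      by rewrite linearZ /= coord_free ?eqxx ?mulr1 //; exact: basis_free (vbasisP U).
    move=> i ij; rewrite linearZ /= coord_free; last exact: basis_free (vbasisP U).
    by rewrite (negbTE ij) mulr0.
  + apply/seteqP; split => x /=.
    * move=> Sx; have := ST x Sx; rewrite bspan => -[c Tx].
      pose v := \row_(j < n) c j.
      have Cv : C v by exists x; split => //; rewrite Tx /lc; apply: eq_bigr => j _; rewrite mxE.
      have vU := CU v Cv.
      exists (fun i => coord vb i v); apply: Tinj.
      by rewrite Txs // -(coord_vbasis vU) Tx /lc; apply: eq_bigr => j _; rewrite mxE.
    * by move=> [c ->]; apply: Ssum => i; exact: (xsP i).1.
- exact: dimle.
- move=> dn y; rewrite bspan => -[c Ty].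
  pose v := \row_(j < n) c j.
  have eU : U = fullv.
    by apply/eqP; rewrite eqEdim subvf dimvf dim_matrix mul1r dn leqnn.
  have : v \in U by rewrite eU memvf.
  move/UC => [x [Sx Tx]]; exists x => //.
  by rewrite Tx Ty /lc; apply: eq_bigr => j _; rewrite mxE.
Qed.

Theorem mainTheorem11 (R : realType) (V : completeNormedModType R[i])
  (ip : V -> V -> R[i]) (H0 G w : {linear V -> V}) (n : nat)
  (h0 g : R[i]) (lambda : R) :
  hilbert_ip ip ->
  is_opnorm H0 h0 -> has_dim (ker H0) n ->
  refl_ginv H0 G -> is_opnorm G g ->
  h0 = 1 ->
  is_opnorm w 1 ->
  0 <= lambda -> lambda%:C < 1 / (h0 * g) ->
  exists m : nat,
    has_dim (ker (fun x => H0 x + lambda%:C *: w x)) m /\ (m <= n)%N /\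
    (m = n ->
     exists Tinv : V -> V,
       cancel (fun x => x + G (lambda%:C *: w x)) Tinv /\
       cancel Tinv (fun x => x + G (lambda%:C *: w x)) /\
       ker (fun x => H0 x + lambda%:C *: w x) = Tinv @` ker H0).
Proof.
move=> _ _ hdim [gi1 gi2] [hG _] -> [hw _] l0 lt.
rewrite !mul1r in lt.
have g0 : 0 < g by rewrite -invr_gt0; apply: le_lt_trans lt; rewrite ler0c.
have ge : g = (complex.Re g)%:C by rewrite complex.RRe_real // gtr0_real.
set gr := complex.Re g in ge.
have gr0 : 0 < gr by rewrite -ltcR -ge.
rewrite ge -fmorphV ltcR in lt.
have q1 : lambda * gr < 1.
  by rewrite -(ltr_pM2r gr0) mulVf ?gt_eqF // in lt.
have q0 : 0 <= lambda * gr by rewrite mulr_ge0 // ltW.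
pose A x := G (lambda%:C *: w x).
have Gb z : nv (G z) <= gr * nv z.
  by rewrite -lecR rmorphM /= -!nvE -ge; apply: hG.
have wb z : nv (w z) <= nv z.
  by rewrite -lecR -!nvE -[`|z|]mul1r; apply: hw.
have Aq x : nv (A x) <= (lambda * gr) * nv x.
  apply: (le_trans (Gb _)); rewrite nvZ ger0_norm //.
  have := wb x; have := nv_ge0 (w x); nra.
have addA x y : A (x - y) = A x - A y.
  by rewrite /A (linearB w) scalerBr linearB.
pose T x := x + A x.
have Tl a x y : T (a *: x + y) = a *: T x + T y.
  rewrite /T /A (linearP w) scalerDr scalerA mulrC -scalerA linearP /=.
  by rewrite scalerDr addrACA.
have Tinj : injective T.
  move=> x y Txy.
  have h : T (x - y) = 0.
    by rewrite -scaleN1r addrC Tl Txy scaleN1r addrC subrr.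
  apply/eqP; rewrite -subr_eq0; apply/eqP; apply: nv0.
  have e : x - y = - A (x - y) by apply/eqP; rewrite -addr_eq0; apply/eqP.
  have := Aq (x - y); rewrite -nvN -e; have := nv_ge0 (x - y); nra.
pose S := ker (fun x => H0 x + lambda%:C *: w x).
have S0 : S 0 by rewrite /S /ker /= (linear0 w) (linear0 H0) scaler0 addr0.
have Sl a x y : S x -> S y -> S (a *: x + y).
  rewrite /S /ker /= => Sx Sy.
  rewrite (linearP H0) (linearP w) scalerDr scalerA mulrC -scalerA.
  by rewrite addrACA -scalerDr Sx Sy scaler0 addr0.
have ST x : S x -> ker H0 (T x).
  rewrite /S /ker /= => Sx.
  have e : lambda%:C *: w x = - H0 x.
    by apply/eqP; rewrite -addr_eq0 addrC; apply/eqP.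
  by rewrite /T /A linearD e linearN /= linearN /= gi2 subrr.
have [m [hS [mn hm]]] := @dim_transfer R V S (ker H0) T n hdim S0 Sl Tl ST Tinj.
exists m; split => //; split => // /hm hsurj.
have : forall y, exists x, T x = y.
  by move=> y; exact: (@neumann _ _ A addA _ q0 q1 Aq y).
move=> /choice [Tinv HT].
have c1 : cancel T Tinv by move=> x; apply: Tinj; rewrite HT.
exists Tinv; split => //; split => //.
apply/seteqP; split => x /=.
- by move=> Sx; exists (T x); [exact: ST | exact: c1].
- move=> [y Ky <-]; have [z Sz <-] := hsurj y Ky; by rewrite c1.
Qed.
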